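(* Let $f\in\mathrm{Homeo}_+(\mathbb{R})$ satisfy $f(x+1)=f(x)+2$ for all $x\in\mathbb{R}$ and $f(0)=0$. Then there is a unique group homomorphism $\theta_f:GA(\mathbb{Q}_2)\to\mathrm{Homeo}_+(\mathbb{R})$ with $\theta_f(T_1)=T_1$ and $\theta_f(D)=f$, and this homomorphism is injective.
   Context: $\mathbb{Q}_2=\{p/2^q:p,q\in\mathbb{Z}\}$ denotes the dyadic rationals. $GA(\mathbb{Q}_2)$ is the group under composition of affine maps $x\mapsto 2^nx+r$ of $\mathbb{R}$ with $n\in\mathbb{Z}$, $r\in\mathbb{Q}_2$; $T_1(x)=x+1$, $D(x)=2x$. $\mathrm{Homeo}_+(\mathbb{R})$ is the group of increasing self-homeomorphisms of $\mathbb{R}$. *)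

(* Defs.v *)
From Stdlib Require Import Reals ZArith.
Open Scope R_scope.

Definition dyadic (r : R) : Prop :=
  exists p q : Z, r = IZR p / powerRZ 2 q.

Definition GA (g : R -> R) : Prop :=
  exists (n : Z) (r : R), dyadic r /\ forall x, g x = powerRZ 2 n * x + r.

Definition T1 : R -> R := fun x => x + 1.
Definition D : R -> R := fun x => 2 * x.

Definition HomeoPlus (f : R -> R) : Prop :=
  (exists g : R -> R, continuity f /\ continuity g /\
     (forall x, g (f x) = x) /\ (forall y, f (g y) = y)) /\
  (forall x y, x < y -> f x < f y).

Definition fcomp (g h : R -> R) : R -> R := fun x => g (h x).

Definition IsHomGA (theta : (R -> R) -> (R -> R)) : Prop :=
  (forall g, GA g -> HomeoPlus (theta g)) /\
  (forall g h, GA g -> GA h -> theta (fcomp g h) = fcomp (theta g) (theta h)).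

(* Main.v *)
Require Import Defs.
From Stdlib Require Import Reals ZArith ClassicalEpsilon FunctionalExtensionality Lra Lia.
Open Scope R_scope.

Fixpoint itn (h : R -> R) (k : nat) (x : R) : R :=
  match k with O => x | S k => h (itn h k x) end.

Definition fpow (f fi : R -> R) (z : Z) (x : R) : R :=
  if (0 <=? z)%Z then itn f (Z.to_nat z) x else itn fi (Z.to_nat (- z)) x.

Lemma fpow0 f fi x : fpow f fi 0 x = x.
Proof. reflexivity. Qed.

Lemma fpow_succ f fi (H2 : forall y, f (fi y) = y) z x :
  fpow f fi (z + 1) x = f (fpow f fi z x).
Proof.
  unfold fpow. destruct (Z.leb_spec 0 z).
  - destruct (Z.leb_spec 0 (z+1)); [|lia].
    replace (Z.to_nat (z+1)) with (S (Z.to_nat z)) by lia. reflexivity.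
  - destruct (Z.eq_dec z (-1)) as [->|Hn].
    + simpl. rewrite H2. reflexivity.
    + destruct (Z.leb_spec 0 (z+1)); [lia|].
      replace (Z.to_nat (- z)) with (S (Z.to_nat (- (z+1)))) by lia.
      simpl. rewrite H2. reflexivity.
Qed.

Lemma fpow_pred f fi (H1 : forall y, fi (f y) = y) (H2 : forall y, f (fi y) = y) z x :
  fpow f fi (z - 1) x = fi (fpow f fi z x).
Proof.
  replace z with ((z - 1) + 1)%Z at 2 by ring.
  rewrite fpow_succ by auto. rewrite H1. reflexivity.
Qed.

Lemma fpow_add f fi (H1 : forall y, fi (f y) = y) (H2 : forall y, f (fi y) = y) a b x :
  fpow f fi (a + b) x = fpow f fi a (fpow f fi b x).
Proof.
  revert x. induction a using Z.peano_ind; intro x.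
  - reflexivity.
  - rewrite <- Z.add_1_r.
    replace (a + 1 + b)%Z with ((a + b) + 1)%Z by ring.
    rewrite !fpow_succ by auto. rewrite IHa. reflexivity.
  - rewrite <- Z.sub_1_r.
    replace (a - 1 + b)%Z with ((a + b) - 1)%Z by ring.
    rewrite !fpow_pred by auto. rewrite IHa. reflexivity.
Qed.

Lemma fpow_cancel f fi (H1 : forall y, fi (f y) = y) (H2 : forall y, f (fi y) = y) a x :
  fpow f fi (- a) (fpow f fi a x) = x.
Proof. rewrite <- fpow_add by auto. replace (-a + a)%Z with 0%Z by ring. reflexivity. Qed.

Lemma fpow_cancel' f fi (H1 : forall y, fi (f y) = y) (H2 : forall y, f (fi y) = y) a x :
  fpow f fi a (fpow f fi (- a) x) = x.
Proof. rewrite <- fpow_add by auto. replace (a + - a)%Z with 0%Z by ring. reflexivity. Qed.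

Lemma perZ f (Hper : forall x, f (x + 1) = f x + 2) (m : Z) x :
  f (x + IZR m) = f x + 2 * IZR m.
Proof.
  revert x. induction m using Z.peano_ind; intro x.
  - rewrite Rplus_0_r. ring.
  - rewrite <- Z.add_1_r, plus_IZR. replace (x + (IZR m + 1)) with ((x + IZR m) + 1) by ring.
    rewrite Hper, IHm. ring.
  - rewrite <- Z.sub_1_r, minus_IZR.
    assert (E := Hper (x + (IZR m - 1))).
    replace (x + (IZR m - 1) + 1) with (x + IZR m) by ring.
    replace (x + (IZR m - 1) + 1) with (x + IZR m) in E by ring.
    rewrite IHm in E. lra.
Qed.

Lemma IZR_2pow (j : nat) : IZR (2 ^ Z.of_nat j) = powerRZ 2 (Z.of_nat j).
Proof. rewrite <- pow_IZR, <- pow_powerRZ. reflexivity. Qed.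

Lemma fpow_trans f fi (H1 : forall y, fi (f y) = y) (H2 : forall y, f (fi y) = y)
  (Hper : forall x, f (x + 1) = f x + 2) (k : nat) (m : Z) x :
  fpow f fi (Z.of_nat k) (x + IZR m) = fpow f fi (Z.of_nat k) x + IZR (m * 2 ^ Z.of_nat k).
Proof.
  induction k.
  - simpl. rewrite Z.mul_1_r. reflexivity.
  - rewrite Nat2Z.inj_succ, <- Z.add_1_r, !fpow_succ by auto.
    rewrite IHk, perZ by auto. rewrite Z.pow_add_r by lia.
    rewrite !mult_IZR. change (2 ^ 1)%Z with 2%Z. ring.
Qed.

Lemma fpow_trans_inv f fi (H1 : forall y, fi (f y) = y) (H2 : forall y, f (fi y) = y)
  (Hper : forall x, f (x + 1) = f x + 2) (k : nat) (m : Z) x :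
  fpow f fi (- Z.of_nat k) (x + IZR (m * 2 ^ Z.of_nat k)) = fpow f fi (- Z.of_nat k) x + IZR m.
Proof.
  rewrite <- (fpow_cancel' f fi H1 H2 (Z.of_nat k) x) at 1.
  rewrite <- fpow_trans by auto. apply fpow_cancel; auto.
Qed.

Definition Rep (g : R -> R) (n : Z) (k : nat) (m : Z) : Prop :=
  forall x, g x = powerRZ 2 n * x + IZR m * powerRZ 2 (- Z.of_nat k).

Definition F f fi (n : Z) (k : nat) (m : Z) (x : R) : R :=
  fpow f fi (- Z.of_nat k) (fpow f fi (Z.of_nat k + n) x + IZR m).

Lemma F_raise f fi (H1 : forall y, fi (f y) = y) (H2 : forall y, f (fi y) = y)
  (Hper : forall x, f (x + 1) = f x + 2) n k m j x :
  F f fi n k m x = F f fi n (k + j) (m * 2 ^ Z.of_nat j) x.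
Proof.
  unfold F. rewrite Nat2Z.inj_add.
  replace (- (Z.of_nat k + Z.of_nat j))%Z with (- Z.of_nat k + - Z.of_nat j)%Z by ring.
  replace (Z.of_nat k + Z.of_nat j + n)%Z with (Z.of_nat j + (Z.of_nat k + n))%Z by ring.
  rewrite !fpow_add by auto. rewrite fpow_trans_inv by auto.
  rewrite fpow_cancel by auto. reflexivity.
Qed.

Lemma pow2_gt1 d : (0 < d)%Z -> 1 < powerRZ 2 d.
Proof.
  intro Hd. replace d with (Z.of_nat (Z.to_nat d)) by lia.
  rewrite <- pow_powerRZ. apply Rlt_pow_R1; [lra|lia].
Qed.

Lemma pow2_inj a b : powerRZ 2 a = powerRZ 2 b -> a = b.
Proof.
  intro E. destruct (Z.lt_trichotomy a b) as [H|[H|H]]; auto; exfalso.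
  - replace b with (a + (b - a))%Z in E by ring.
    rewrite powerRZ_add in E by lra.
    assert (0 < powerRZ 2 a) by (apply powerRZ_lt; lra).
    assert (1 < powerRZ 2 (b - a)) by (apply pow2_gt1; lia). nra.
  - replace a with (b + (a - b))%Z in E by ring.
    rewrite powerRZ_add in E by lra.
    assert (0 < powerRZ 2 b) by (apply powerRZ_lt; lra).
    assert (1 < powerRZ 2 (a - b)) by (apply pow2_gt1; lia). nra.
Qed.

Lemma Rep_unique g n k m n' k' m' :
  Rep g n k m -> Rep g n' k' m' -> n = n' /\ (m * 2 ^ Z.of_nat k' = m' * 2 ^ Z.of_nat k)%Z.
Proof.
  intros R1 R2. pose proof (R1 0) as A0. pose proof (R2 0) as B0.
  pose proof (R1 1) as A1. pose proof (R2 1) as B1.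
  split.
  - apply pow2_inj. lra.
  - apply eq_IZR. rewrite !mult_IZR, !IZR_2pow.
    rewrite !powerRZ_neg' in A0, B0.
    assert (P1 : 0 < powerRZ 2 (Z.of_nat k)) by (apply powerRZ_lt; lra).
    assert (P2 : 0 < powerRZ 2 (Z.of_nat k')) by (apply powerRZ_lt; lra).
    assert (E : IZR m * / powerRZ 2 (Z.of_nat k) = IZR m' * / powerRZ 2 (Z.of_nat k')) by lra.
    apply (f_equal (fun t => t * powerRZ 2 (Z.of_nat k) * powerRZ 2 (Z.of_nat k'))) in E.
    replace (IZR m * / powerRZ 2 (Z.of_nat k) * powerRZ 2 (Z.of_nat k) * powerRZ 2 (Z.of_nat k'))
      with (IZR m * powerRZ 2 (Z.of_nat k')) in E by (field; lra).
    replace (IZR m' * / powerRZ 2 (Z.of_nat k') * powerRZ 2 (Z.of_nat k) * powerRZ 2 (Z.of_nat k'))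
      with (IZR m' * powerRZ 2 (Z.of_nat k)) in E by (field; lra).
    exact E.
Qed.

Lemma F_unique f fi (H1 : forall y, fi (f y) = y) (H2 : forall y, f (fi y) = y)
  (Hper : forall x, f (x + 1) = f x + 2) g n k m n' k' m' x :
  Rep g n k m -> Rep g n' k' m' -> F f fi n k m x = F f fi n' k' m' x.
Proof.
  intros R1 R2. destruct (Rep_unique _ _ _ _ _ _ _ R1 R2) as [-> E].
  rewrite (F_raise f fi H1 H2 Hper n' k m k'), (F_raise f fi H1 H2 Hper n' k' m' k).
  rewrite E, Nat.add_comm. reflexivity.
Qed.

Definition theta f fi (g : R -> R) (x : R) : R :=
  epsilon (inhabits 0) (fun y => exists n k m, Rep g n k m /\ y = F f fi n k m x).

Lemma theta_rep f fi (H1 : forall y, fi (f y) = y) (H2 : forall y, f (fi y) = y)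
  (Hper : forall x, f (x + 1) = f x + 2) g n k m :
  Rep g n k m -> theta f fi g = F f fi n k m.
Proof.
  intro Rg. extensionality x. unfold theta.
  destruct (epsilon_spec (inhabits 0) (fun y => exists n k m, Rep g n k m /\ y = F f fi n k m x))
    as (n' & k' & m' & R' & ->).
  { exists (F f fi n k m x), n, k, m. auto. }
  eapply F_unique; eauto.
Qed.

Lemma GA_rep g : GA g -> exists n k m, Rep g n k m.
Proof.
  intros (n & r & (p & q & Hr) & Hg).
  destruct (Z.leb_spec 0 q).
  - exists n, (Z.to_nat q), p. intro x. rewrite Hg, Hr, Z2Nat.id by lia.
    rewrite powerRZ_neg'. reflexivity.
  - exists n, 0%nat, (p * 2 ^ Z.of_nat (Z.to_nat (- q)))%Z. intro x.
    rewrite Hg, Hr, mult_IZR, IZR_2pow, Z2Nat.id by lia. simpl.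
    replace q with (- (- q))%Z at 1 by ring. rewrite powerRZ_neg'.
    assert (0 < powerRZ 2 (- q)) by (apply powerRZ_lt; lra).
    unfold Rdiv. rewrite Rinv_inv. ring.
Qed.

Lemma HP_comp a b : HomeoPlus a -> HomeoPlus b -> HomeoPlus (fun x => a (b x)).
Proof.
  intros [[ai [Ca [Cai [A1 A2]]]] Ia] [[bi [Cb [Cbi [B1 B2]]]] Ib].
  split.
  - exists (fun y => bi (ai y)). repeat split.
    + exact (continuity_comp b a Cb Ca).
    + exact (continuity_comp ai bi Cai Cbi).
    + intro x. simpl. rewrite A1, B1. reflexivity.
    + intro y. simpl. rewrite B2, A2. reflexivity.
  - intros x y H. apply Ia, Ib, H.
Qed.

Lemma HP_trans c : HomeoPlus (fun x => x + c).
Proof.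
  assert (Cc : forall d, continuity (fun x => x + d)).
  { intro d. apply (continuity_plus (fun x => x) (fun _ => d)).
    - apply derivable_continuous, derivable_id.
    - apply continuity_const. intros ? ?. reflexivity. }
  split.
  - exists (fun y => y + - c). repeat split; auto; intros; ring.
  - intros; lra.
Qed.

Lemma HP_id : HomeoPlus (fun x => x).
Proof.
  assert (E : (fun x : R => x) = (fun x => x + 0)) by (extensionality x; ring).
  rewrite E. apply HP_trans.
Qed.

Lemma HP_inv f fi : continuity f -> continuity fi -> (forall y, fi (f y) = y) ->
  (forall y, f (fi y) = y) -> (forall x y, x < y -> f x < f y) -> HomeoPlus fi.
Proof.
  intros Cf Cfi H1 H2 I. split.
  - exists f. repeat split; auto.
  - intros x y H. destruct (Rlt_le_dec (fi x) (fi y)) as [|L]; auto.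
    destruct L as [L|L].
    + apply I in L. rewrite !H2 in L. lra.
    + apply (f_equal f) in L. rewrite !H2 in L. lra.
Qed.

Lemma HP_itn h k : HomeoPlus h -> HomeoPlus (itn h k).
Proof.
  intro Hh. induction k.
  - apply HP_id.
  - change (HomeoPlus (fun x => h (itn h k x))). apply HP_comp; auto.
Qed.

Lemma HP_fpow f fi z : HomeoPlus f -> HomeoPlus fi -> HomeoPlus (fpow f fi z).
Proof.
  intros Hf Hfi. unfold fpow. destruct (0 <=? z)%Z; apply HP_itn; auto.
Qed.

Lemma HP_F f fi n k m : HomeoPlus f -> HomeoPlus fi -> HomeoPlus (F f fi n k m).
Proof.
  intros Hf Hfi. unfold F.
  apply (HP_comp (fpow f fi (- Z.of_nat k)) (fun x => fpow f fi (Z.of_nat k + n) x + IZR m)).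
  - apply HP_fpow; auto.
  - apply (HP_comp (fun x => x + IZR m)); [apply HP_trans|apply HP_fpow; auto].
Qed.

Lemma Rep_raise g n k m j : Rep g n k m -> Rep g n (k + j) (m * 2 ^ Z.of_nat j).
Proof.
  intros Rg x. rewrite Rg, mult_IZR, IZR_2pow, Nat2Z.inj_add.
  rewrite !powerRZ_neg', powerRZ_add by lra.
  assert (0 < powerRZ 2 (Z.of_nat k)) by (apply powerRZ_lt; lra).
  assert (0 < powerRZ 2 (Z.of_nat j)) by (apply powerRZ_lt; lra).
  field. lra.
Qed.

Lemma Rep_comp g h n1 K M1 n2 k2 m2 (J : nat) :
  Rep g n1 K M1 -> Rep h n2 k2 m2 -> Z.of_nat J = (Z.of_nat K + n1 - Z.of_nat k2)%Z ->
  Rep (fcomp g h) (n1 + n2) K (M1 + m2 * 2 ^ Z.of_nat J).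
Proof.
  intros Rg Rh EJ x. unfold fcomp. rewrite Rg, Rh, plus_IZR, mult_IZR, IZR_2pow, EJ.
  replace (Z.of_nat K + n1 - Z.of_nat k2)%Z with (Z.of_nat K + n1 + - Z.of_nat k2)%Z by ring.
  rewrite !powerRZ_add by lra. rewrite !powerRZ_neg'.
  assert (0 < powerRZ 2 (Z.of_nat K)) by (apply powerRZ_lt; lra).
  assert (0 < powerRZ 2 (Z.of_nat k2)) by (apply powerRZ_lt; lra).
  field. lra.
Qed.

Lemma F_comp f fi (H1 : forall y, fi (f y) = y) (H2 : forall y, f (fi y) = y)
  (Hper : forall x, f (x + 1) = f x + 2) n1 K M1 n2 k2 m2 (J : nat) x :
  Z.of_nat J = (Z.of_nat K + n1 - Z.of_nat k2)%Z ->
  F f fi (n1 + n2) K (M1 + m2 * 2 ^ Z.of_nat J) x = F f fi n1 K M1 (F f fi n2 k2 m2 x).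
Proof.
  intro EJ. unfold F.
  rewrite <- (fpow_add f fi H1 H2 (Z.of_nat K + n1) (- Z.of_nat k2)).
  replace (Z.of_nat K + n1 + - Z.of_nat k2)%Z with (Z.of_nat J) by lia.
  rewrite fpow_trans by auto. rewrite <- fpow_add by auto.
  replace (Z.of_nat J + (Z.of_nat k2 + n2))%Z with (Z.of_nat K + (n1 + n2))%Z by lia.
  rewrite plus_IZR. f_equal. ring.
Qed.

Definition Dz (z : Z) : R -> R := fun x => powerRZ 2 z * x.
Definition Tz (m : Z) : R -> R := fun x => x + IZR m.

Lemma GA_aff n m : GA (fun x => powerRZ 2 n * x + IZR m).
Proof.
  exists n, (IZR m). split; auto. exists m, 0%Z. simpl. field.
Qed.

Lemma GA_Dz z : GA (Dz z).
Proof.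
  assert (E : Dz z = (fun x => powerRZ 2 z * x + IZR 0)) by (extensionality x; unfold Dz; ring).
  rewrite E. apply GA_aff.
Qed.

Lemma GA_Tz m : GA (Tz m).
Proof.
  assert (E : Tz m = (fun x => powerRZ 2 0 * x + IZR m)) by (extensionality x; unfold Tz; simpl; ring).
  rewrite E. apply GA_aff.
Qed.

Lemma GA_D : GA D.
Proof.
  assert (E : D = Dz 1) by (extensionality x; unfold D, Dz; simpl; ring).
  rewrite E. apply GA_Dz.
Qed.

Lemma GA_T1 : GA T1.
Proof.
  assert (E : T1 = Tz 1) by (extensionality x; unfold T1, Tz; simpl; ring).
  rewrite E. apply GA_Tz.
Qed.

Lemma th_Dz f fi (H1 : forall y, fi (f y) = y) (H2 : forall y, f (fi y) = y) th :
  IsHomGA th -> th D = f -> forall z, th (Dz z) = fpow f fi z.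
Proof.
  intros [_ Hh] HD.
  assert (S : forall z, Dz (z + 1) = fcomp D (Dz z)).
  { intro z. extensionality x. unfold Dz, D, fcomp. rewrite powerRZ_add by lra. simpl. ring. }
  induction z using Z.peano_ind.
  - assert (E : D = fcomp D (Dz 0)) by (extensionality x; unfold Dz, D, fcomp; simpl; ring).
    assert (E2 := f_equal th E). rewrite Hh in E2 by (apply GA_D || apply GA_Dz).
    rewrite HD in E2. extensionality x. apply (f_equal (fun k => fi (k x))) in E2.
    unfold fcomp in E2. rewrite !H1 in E2. rewrite <- E2. reflexivity.
  - rewrite <- Z.add_1_r, S, Hh by (apply GA_D || apply GA_Dz).
    rewrite HD, IHz. extensionality x. unfold fcomp. rewrite fpow_succ; auto.
  - rewrite <- Z.sub_1_r. extensionality x.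
    assert (E := S (z - 1)%Z). replace (z - 1 + 1)%Z with z in E by ring.
    apply (f_equal th) in E. rewrite Hh, HD, IHz in E by (apply GA_D || apply GA_Dz).
    apply (f_equal (fun k => fi (k x))) in E. unfold fcomp in E. rewrite H1 in E.
    rewrite <- E, fpow_pred; auto.
Qed.

Lemma th_Tz th : IsHomGA th -> th T1 = T1 -> forall m, th (Tz m) = Tz m.
Proof.
  intros [_ Hh] HT.
  assert (S : forall m, Tz (m + 1) = fcomp T1 (Tz m)).
  { intro m. extensionality x. unfold Tz, T1, fcomp. rewrite plus_IZR. ring. }
  induction m using Z.peano_ind.
  - assert (E : T1 = fcomp T1 (Tz 0)) by (extensionality x; unfold Tz, T1, fcomp; simpl; ring).
    assert (E2 := f_equal th E). rewrite Hh in E2 by (apply GA_T1 || apply GA_Tz).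
    rewrite HT in E2. extensionality x. apply (f_equal (fun k => k x)) in E2.
    unfold fcomp, T1 in E2. change (th (Tz 0) x = Tz 0 x). unfold Tz at 2. simpl. lra.
  - rewrite <- Z.add_1_r, S, Hh by (apply GA_T1 || apply GA_Tz).
    rewrite HT, IHm. reflexivity.
  - rewrite <- Z.sub_1_r. extensionality x.
    assert (E := S (m - 1)%Z). replace (m - 1 + 1)%Z with m in E by ring.
    apply (f_equal th) in E. rewrite Hh, HT, IHm in E by (apply GA_T1 || apply GA_Tz).
    apply (f_equal (fun k => k x)) in E. unfold fcomp, T1, Tz in E. unfold Tz.
    rewrite minus_IZR in *. simpl in *. lra.
Qed.

Lemma fpow_zero f fi (H1 : forall y, fi (f y) = y) (H2 : forall y, f (fi y) = y)
  (H0 : f 0 = 0) z : fpow f fi z 0 = 0.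
Proof.
  induction z using Z.peano_ind.
  - reflexivity.
  - rewrite <- Z.add_1_r, fpow_succ, IHz; auto.
  - rewrite <- Z.sub_1_r, fpow_pred, IHz, <- H0, H1; auto.
Qed.

Lemma fpow_not_id f fi (H1 : forall y, fi (f y) = y) (H2 : forall y, f (fi y) = y)
  (Hper : forall x, f (x + 1) = f x + 2) (H0 : f 0 = 0) c :
  (forall y, fpow f fi c y = y) -> c = 0%Z.
Proof.
  intro Hc.
  assert (K : forall k : nat, fpow f fi (Z.of_nat (S k)) 1 <> 1).
  { intros k E. assert (E2 := fpow_trans f fi H1 H2 Hper (S k) 1 0).
    rewrite Rplus_0_l, fpow_zero, Rplus_0_l, E in E2 by auto.
    apply eq_IZR in E2. rewrite Z.mul_1_l in E2.
    assert (2 ^ 1 <= 2 ^ Z.of_nat (S k))%Z by (apply Z.pow_le_mono_r; lia).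
    simpl in H. lia. }
  destruct (Z.lt_trichotomy c 0) as [L|[L|L]]; auto; exfalso.
  - apply (K (pred (Z.to_nat (- c)))).
    replace (Z.of_nat (S (pred (Z.to_nat (- c))))) with (- c)%Z by lia.
    rewrite <- (Hc 1) at 1. apply fpow_cancel; auto.
  - apply (K (pred (Z.to_nat c))).
    replace (Z.of_nat (S (pred (Z.to_nat c)))) with c by lia. apply Hc.
Qed.

Theorem mainTheorem4 (f : R -> R) (Hf : HomeoPlus f)
  (Hper : forall x, f (x + 1) = f x + 2) (H0 : f 0 = 0) :
  exists theta : (R -> R) -> (R -> R),
    IsHomGA theta /\ theta T1 = T1 /\ theta D = f /\
    (forall theta' : (R -> R) -> (R -> R),
        IsHomGA theta' -> theta' T1 = T1 -> theta' D = f ->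
        forall g, GA g -> theta' g = theta g) /\
    (forall g h, GA g -> GA h -> theta g = theta h -> g = h).
Proof.
  pose proof Hf as Hf'.
  destruct Hf' as [[fi [Cf [Cfi [H1 H2]]]] Hinc].
  assert (Hfi : HomeoPlus fi) by exact (HP_inv f fi Cf Cfi H1 H2 Hinc).
  exists (theta f fi).
  assert (HomT : IsHomGA (theta f fi)).
  { split.
    - intros g Gg. destruct (GA_rep g Gg) as (n & k & m & Rg).
      rewrite (theta_rep f fi H1 H2 Hper g n k m Rg). apply HP_F; auto.
    - intros g h Gg Gh.
      destruct (GA_rep g Gg) as (n1 & k1 & m1 & Rg).
      destruct (GA_rep h Gh) as (n2 & k2 & m2 & Rh).
      set (j0 := (k2 + Z.abs_nat n1)%nat).
      assert (Rg' := Rep_raise g n1 k1 m1 j0 Rg).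
      set (K := (k1 + j0)%nat) in *.
      set (J := Z.to_nat (Z.of_nat K + n1 - Z.of_nat k2)).
      assert (EJ : Z.of_nat J = (Z.of_nat K + n1 - Z.of_nat k2)%Z).
      { unfold J, K, j0. lia. }
      assert (Rc := Rep_comp _ _ _ _ _ _ _ _ _ Rg' Rh EJ).
      rewrite (theta_rep f fi H1 H2 Hper _ _ _ _ Rc), (theta_rep f fi H1 H2 Hper _ _ _ _ Rg'),
        (theta_rep f fi H1 H2 Hper _ _ _ _ Rh).
      extensionality x. unfold fcomp. apply F_comp; auto. }
  split; [exact HomT|].
  split.
  { assert (R1 : Rep T1 0 0 1) by (intro x; unfold T1; simpl; ring).
    rewrite (theta_rep f fi H1 H2 Hper _ _ _ _ R1). extensionality x. reflexivity. }
  split.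
  { assert (R1 : Rep D 1 0 0) by (intro x; unfold D; simpl; ring).
    rewrite (theta_rep f fi H1 H2 Hper _ _ _ _ R1). extensionality x. unfold F. simpl.
    rewrite Rplus_0_r. unfold fpow. simpl. reflexivity. }
  split.
  - intros th Hth HT HD g Gg.
    destruct (GA_rep g Gg) as (n & k & m & Rg).
    rewrite (theta_rep f fi H1 H2 Hper _ _ _ _ Rg).
    assert (E : g = fcomp (Dz (- Z.of_nat k)) (fcomp (Tz m) (Dz (Z.of_nat k + n)))).
    { extensionality x. rewrite Rg. unfold fcomp, Dz, Tz.
      rewrite powerRZ_add by lra. rewrite powerRZ_neg'.
      assert (0 < powerRZ 2 (Z.of_nat k)) by (apply powerRZ_lt; lra).
      field. lra. }
    assert (GTD : GA (fcomp (Tz m) (Dz (Z.of_nat k + n)))).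
    { assert (E2 : fcomp (Tz m) (Dz (Z.of_nat k + n)) = (fun x => powerRZ 2 (Z.of_nat k + n) * x + IZR m))
        by (extensionality x; reflexivity).
      rewrite E2. apply GA_aff. }
    destruct Hth as [HP Hh].
    rewrite E, Hh, Hh by (apply GA_Dz || apply GA_Tz || exact GTD).
    rewrite (th_Dz f fi H1 H2 th (conj HP Hh) HD), (th_Dz f fi H1 H2 th (conj HP Hh) HD),
      (th_Tz th (conj HP Hh) HT).
    extensionality x. reflexivity.
  - intros g h Gg Gh Eq.
    destruct (GA_rep g Gg) as (n1 & k1 & m1 & Rg).
    destruct (GA_rep h Gh) as (n2 & k2 & m2 & Rh).
    assert (Rg' := Rep_raise g n1 k1 m1 k2 Rg).
    assert (Rh' := Rep_raise h n2 k2 m2 k1 Rh).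
    rewrite Nat.add_comm in Rh'.
    set (K := (k1 + k2)%nat) in *.
    set (M1 := (m1 * 2 ^ Z.of_nat k2)%Z) in *.
    set (M2 := (m2 * 2 ^ Z.of_nat k1)%Z) in *.
    rewrite (theta_rep f fi H1 H2 Hper _ _ _ _ Rg'), (theta_rep f fi H1 H2 Hper _ _ _ _ Rh') in Eq.
    assert (E1 : forall x, fpow f fi (Z.of_nat K + n1) x + IZR M1 = fpow f fi (Z.of_nat K + n2) x + IZR M2).
    { intro x. apply (f_equal (fun k => fpow f fi (Z.of_nat K) (k x))) in Eq. unfold F in Eq.
      rewrite !fpow_cancel' in Eq by auto. exact Eq. }
    assert (E2 : forall y, fpow f fi (n1 - n2) y + IZR M1 = y + IZR M2).
    { intro y. specialize (E1 (fpow f fi (- (Z.of_nat K + n2)) y)).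
      rewrite fpow_cancel' in E1 by auto. rewrite <- fpow_add in E1 by auto.
      replace (Z.of_nat K + n1 + - (Z.of_nat K + n2))%Z with (n1 - n2)%Z in E1 by ring.
      exact E1. }
    assert (EM : IZR M1 = IZR M2).
    { specialize (E2 0). rewrite fpow_zero in E2 by auto. lra. }
    assert (En : n1 = n2).
    { assert (C0 : (n1 - n2 = 0)%Z).
      { apply (fpow_not_id f fi H1 H2 Hper H0). intro y. specialize (E2 y). lra. }
      lia. }
    subst n2. extensionality x. rewrite Rg', Rh', EM. reflexivity.
Qed.
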